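(* Let $G$ be a finite group (not necessarily abelian, written additively) of even order $q$, and let $f:G\to G$ be two-to-one (every element of the image of $f$ has exactly two preimages). Then \[\mathrm{pres}(f)\le \lceil 2\sqrt{q}\rceil-1.\] Moreover, if $q$ is a perfect square, then $\mathrm{pres}(f)\le 2\sqrt{q}-2$.
   Context: For a function $g:G\to G$, $V(g)$ denotes the number of distinct values of $g$, i.e. $V(g)=\#\{g(x):x\in G\}$. A permutation of $G$ is a bijection $G\to G$. For functions $f,h:G\to G$, $f-h$ is the pointwise function $x\mapsto f(x)-h(x)$, and $g+f$ is $x\mapsto g(x)+f(x)$. The permutation resemblance of $f:G\to G$ is $\mathrm{pres}(f)=\min\{V(f-h): h \text{ a permutation of } G\}$, equivalently $\mathrm{pres}(f)=\min\{V(g): g:G\to G,\ g+f \text{ is a permutation of } G\}$. *)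

(* Defs.v *)
From HB Require Import structures.
From mathcomp Require Import all_boot all_order all_algebra all_fingroup.
From mathcomp Require Import Rstruct.
Set Implicit Arguments. Unset Strict Implicit. Unset Printing Implicit Defensive.
Import Order.TTheory GRing.Theory Num.Theory.

(* A finite group G is a finGroupType gT (the group is the whole carrier);
   MathComp writes groups multiplicatively, so the paper's x - y is x * y^-1. *)

Definition V (gT : finType) (g : gT -> gT) : nat := #|[set g x | x : gT]|.

Definition fsub (gT : finGroupType) (f h : gT -> gT) : gT -> gT :=
  fun x => (f x * (h x)^-1)%g.

Definition pres (gT : finGroupType) (f : gT -> gT) : nat :=
  \big[minn/#|gT|]_(h : {perm gT}) V (fsub f h).

Definition two_to_one (gT : finType) (f : gT -> gT) : Prop :=
  forall y : gT, y \in codom f -> #|[set x | f x == y]| = 2.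

(* Main.v *)
Require Import Defs.
From HB Require Import structures.
From mathcomp Require Import all_boot all_order all_algebra all_fingroup.
From mathcomp Require Import Rstruct.
From mathcomp Require Import zify lra.
Import Order.TTheory GRing.Theory Num.Theory.

Module Aux.
Set Implicit Arguments. Unset Strict Implicit.
Local Open Scope nat_scope.

Definition Good (gT : finGroupType) (Y U : {set gT}) (b : nat) : Prop :=
  exists beta : gT -> gT, {in Y &, injective beta} /\ {in Y, forall y, beta y \in U}
   /\ #|[set (beta y * y^-1)%g | y in Y]| <= b.

Lemma Good_mono (gT : finGroupType) (Y U : {set gT}) b b' :
  (b <= b')%N -> Good Y U b -> Good Y U b'.
Proof. by move=> le [beta [h1 [h2 h3]]]; exists beta; split=> //; split=> //; apply: leq_trans le. Qed.

Lemma Good0 (gT : finGroupType) (Y U : {set gT}) : #|Y| = 0%N -> Good Y U 0.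
Proof.
move=> /eqP; rewrite cards_eq0 => /eqP ->; exists id; split; first by move=> ??; rewrite inE.
split; first by move=> ?; rewrite inE.
by rewrite imset0 cards0.
Qed.

Lemma bigmin_leq (I : eqType) (r : seq I) (F : I -> nat) x i :
  i \in r -> (\big[minn/x]_(j <- r) F j <= F i)%N.
Proof.
elim: r => [|a r IH] //; rewrite big_cons inE => /orP [/eqP -> | /IH h].
  by rewrite geq_minl.
by rewrite (leq_trans (geq_minr _ _) h).
Qed.

Lemma count_sum (gT : finGroupType) (Y U : {set gT}) :
  (\sum_(t : gT) #|[set y in Y | (t * y)%g \in U]| = #|Y| * #|U|)%N.
Proof.
have E : forall t : gT, #|[set y in Y | (t * y)%g \in U]| = (\sum_(y in Y) ((t * y)%g \in U))%N.
  move=> t; rewrite -sum1_card big_mkcond [RHS]big_mkcond /=.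
  by apply: eq_bigr => y _; rewrite inE; case: (y \in Y); case: (_ \in U).
rewrite (eq_bigr _ (fun t _ => E t)) exchange_big /=.
have F : forall y : gT, (\sum_(t : gT) ((t * y)%g \in U) = #|U|)%N.
  move=> y; rewrite -(card_rcoset U y^-1) -sum1_card [RHS]big_mkcond /=.
  by apply: eq_bigr => t _; rewrite mem_rcoset invgK; case: (_ \in U).
by rewrite (eq_bigr _ (fun y _ => F y)) sum_nat_const.
Qed.

Lemma exists_t (gT : finGroupType) (Y U : {set gT}) m :
  (forall y, y \in Y -> y \notin U) -> #|Y| = m -> #|U| = m -> 0 < m ->
  exists t : gT, m * m <= (#|gT| - 1) * #|[set y in Y | (t * y)%g \in U]|.
Proof.
move=> dis cY cU m0.
have [y yY] : exists y, y \in Y by apply/card_gt0P; rewrite cY.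
have [u uU] : exists u, u \in U by apply/card_gt0P; rewrite cU.
have q2 : 1 < #|gT|.
  apply/card_gt1P; exists y, u; split=> //; apply/eqP => eyu.
  by move: (dis y yY); rewrite eyu uU.
case: (boolP [exists t, m * m <= (#|gT| - 1) * #|[set y in Y | (t * y)%g \in U]|]).
  by move=> /existsP [t ht]; exists t.
rewrite negb_exists => /forallP H.
have S := count_sum Y U; rewrite cY cU in S.
have C1 : #|[set y in Y | (1 * y)%g \in U]| = 0.
  apply/eqP; rewrite cards_eq0; apply/eqP/setP => z; rewrite !inE mul1g.
  by case zY: (z \in Y) => //=; rewrite (negbTE (dis z zY)).
have L : (#|gT| - 1) * (m * m) <= (#|gT| - 1) * (m * m - 1).
  rewrite -{1}S big_distrr /= (bigD1 1%g) //= C1 muln0 add0n.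
  apply: leq_trans (_ : \sum_(t | t != 1%g) (m * m - 1) <= _).
    apply: leq_sum => t _; move: (H t); rewrite -ltnNge.
    by move: (_ * #|_|) => a; lia.
  rewrite sum_nat_const; apply: leq_mul => //.
  by rewrite subn1 -(cardC1 (1%g : gT)); apply: subset_leq_card; apply/subsetP => i; rewrite !inE.
exfalso; move: L; rewrite leq_mul2l => /orP [|]; first by lia.
have : 0 < m * m by rewrite muln_gt0 m0.
by move: (m * m) => a; lia.
Qed.

Lemma step (gT : finGroupType) (Y U : {set gT}) m :
  (forall y, y \in Y -> y \notin U) -> #|Y| = m -> #|U| = m -> 0 < m ->
  exists c (Y' U' : {set gT}), [/\ c <= m, m * m <= (#|gT| - 1) * c,
     #|Y'| = m - c /\ #|U'| = m - c,
     (forall y, y \in Y' -> y \notin U') & forall b, Good Y' U' b -> Good Y U b.+1].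
Proof.
move=> dis cY cU m0.
have [t ht] := exists_t dis cY cU m0.
set Y1 := [set y in Y | (t * y)%g \in U] in ht *.
set T1 := [set (t * y)%g | y in Y1].
have sY1 : Y1 \subset Y by apply/subsetP => y; rewrite inE => /andP[].
have sT1 : T1 \subset U by apply/subsetP => x /imsetP [y]; rewrite inE => /andP[_ h] ->.
have cT1 : #|T1| = #|Y1| by apply: card_imset; apply: mulgI.
exists #|Y1|, (Y :\: Y1), (U :\: T1); split.
- by rewrite -cY; apply: subset_leq_card.
- exact: ht.
- by rewrite !cardsD (setIidPr sY1) (setIidPr sT1) cY cU cT1.
- by move=> y; rewrite !inE => /andP [_ yY]; rewrite (negbTE (dis y yY)) andbF.
move=> b [beta' [inj' [map' card']]].
exists (fun y => if y \in Y1 then (t * y)%g else beta' y); split; [|split].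
- move=> y z yY zY /=; case: ifP => y1; case: ifP => z1.
  + exact: mulgI.
  + move=> e; exfalso.
    have : beta' z \in U :\: T1 by apply: map'; rewrite inE z1 zY.
    by rewrite inE -e imset_f.
  + move=> e; exfalso.
    have : beta' y \in U :\: T1 by apply: map'; rewrite inE y1 yY.
    by rewrite inE e imset_f.
  + by apply: inj'; rewrite inE ?y1 ?z1 ?yY ?zY.
- move=> y yY /=; case: ifP => y1; first by move: y1; rewrite inE => /andP[].
  have : beta' y \in U :\: T1 by apply: map'; rewrite inE y1 yY.
  by rewrite inE => /andP[].
apply: leq_trans (_ : #|t |: [set (beta' y * y^-1)%g | y in Y :\: Y1]| <= _).
  apply: subset_leq_card; apply/subsetP => x /imsetP [y yY ->].
  rewrite !inE; case: ifP => y1; first by rewrite mulgK eqxx.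
  by apply/orP; right; apply/imsetP; exists y => //; rewrite !inE y1 yY.
by rewrite cardsU1; move: card'; case: (_ \notin _) => /=; lia.
Qed.

Lemma arith q m c j : m * j <= q -> m * m <= (q - 1) * c -> c <= m -> 0 < m -> (m - c) * (j + 1) < q.
Proof. move=> h1 h2 h3 h4. nia. Qed.

Lemma triv (gT : finGroupType) : forall m (Y U : {set gT}),
  (forall y, y \in Y -> y \notin U) -> #|Y| = m -> #|U| = m -> Good Y U m.
Proof.
elim/ltn_ind => m IH Y U dis cY cU.
case: (ltnP 0 m) => m0; last first.
  have m00 : m = 0 by lia.
  by rewrite m00; apply: Good0; rewrite cY.
have [c [Y' [U' [cm hc [cY' cU'] dis' comb]]]] := step dis cY cU m0.
have c0 : 0 < c.
  case: (posnP c) => // c0; move: hc; rewrite c0 muln0 leqn0 muln_eq0 orbb => /eqP m00.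
  by move: m0; rewrite m00.
apply: (@Good_mono _ _ _ (m - c).+1); first by lia.
apply: comb; apply: IH => //; lia.
Qed.

Lemma core (gT : finGroupType) n : forall j m (Y U : {set gT}),
  (forall y, y \in Y -> y \notin U) -> #|Y| = m -> #|U| = m -> m * j <= #|gT| ->
  exists m', m' * (j + n + 1) < #|gT| /\ Good Y U (n.+1 + m').
Proof.
have q0 : 0 < #|gT| by apply/card_gt0P; exists 1%g.
elim: n => [|n IHn] j m Y U dis cY cU hq;
  (case: (ltnP 0 m) => m0;
    [|exists 0; split; [by rewrite mul0n|
     apply: (@Good_mono _ _ _ 0); [by []| by apply: Good0; rewrite cY; lia]]]);
  have [c [Y' [U' [cm hc [cY' cU'] dis' comb]]]] := step dis cY cU m0;
  have ar := arith hq hc cm m0.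
- exists (m - c); split; first by rewrite addn0.
  by apply: comb; apply: triv.
- have [m'' [h1 h2]] := IHn (j + 1) (m - c) Y' U' dis' cY' cU' (ltnW ar).
  exists m''; split; first by have -> : j + n.+1 + 1 = j + 1 + n + 1 by lia.
  by apply: comb.
Qed.
Lemma cardY (gT : finGroupType) (f : gT -> gT) : two_to_one f ->
  #|[set f x | x : gT]| * 2 = #|gT|.
Proof.
move=> tt.
rewrite -[RHS]sum1_card (partition_big_imset f) /= -sum_nat_const.
apply: eq_bigr => y /imsetP [x _ ->].
rewrite sum1_card -(tt (f x) (codom_f f x)).
by apply: eq_card => z; rewrite !inE.
Qed.

Lemma reduce (gT : finGroupType) (f : gT -> gT) b : two_to_one f ->
  Good [set f x | x : gT] (~: [set f x | x : gT]) b -> pres f <= b.+1.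
Proof.
move=> tt [beta [inj [map card]]].
set Y := [set f x | x : gT] in inj map card.
pose rep x := odflt x [pick z | f z == f x].
have repP : forall x, f (rep x) = f x.
  by move=> x; rewrite /rep; case: pickP => [z /eqP|] //=.
have repE : forall x x', f x = f x' -> rep x = rep x'.
  move=> x x' e; rewrite /rep e; case: pickP => [z|] //= H.
  by move: (H x'); rewrite eqxx.
have fY : forall x, f x \in Y by move=> x; apply: imset_f.
pose h0 x := if x == rep x then f x else beta (f x).
have h0inj : injective h0.
  move=> x x'; rewrite /h0; case: ifP => /eqP ex; case: ifP => /eqP ex'.
  - by move=> e; rewrite ex ex' (repE _ _ e).
  - move=> e; have := map _ (fY x'); rewrite inE -e fY //.
  - move=> e; have := map _ (fY x); rewrite inE e fY //.
  move=> /inj e; have {}e := e (fY x) (fY x').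
  set S := [set z | f z == f x].
  have cS : #|S| = 2 by apply: tt; apply: codom_f.
  have := cardsD1 (rep x) S; rewrite cS inE repP eqxx /= => cS'.
  have : #|S :\ rep x| <= 1 by move: cS'; rewrite add1n => -[<-].
  move/card_le1_eqP; apply; rewrite !inE.
    by rewrite -e eqxx andbT (repE _ _ e); apply/eqP.
  by rewrite eqxx andbT; apply/eqP.
pose h := perm h0inj.
apply: leq_trans (_ : V (fsub f h) <= _).
  rewrite /pres; apply: bigmin_leq; exact: mem_index_enum.
rewrite /V /fsub.
apply: leq_trans (_ : #|1%g |: [set (x^-1)%g | x in [set (beta y * y^-1)%g | y in Y]]| <= _).
  apply: subset_leq_card; apply/subsetP => z /imsetP [x _ ->].
  rewrite permE /h0 !inE; case: ifP => _; first by rewrite mulgV eqxx.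
  apply/orP; right; apply/imsetP; exists (beta (f x) * (f x)^-1)%g.
    by apply: imset_f.
  by rewrite invgM invgK.
rewrite cardsU1; apply: leq_trans (_ : 1 + b <= _) => //.
apply: leq_add; first by case: (_ \notin _).
exact: leq_trans (leq_imset_card _ _) card.
Qed.

Lemma arith2 q k m : (k - 1) * (k - 1) < q -> q <= k * k -> 3 <= k -> m * k < q -> (k - 1 + m) * (k - 1 + m) < 4 * q.
Proof. move=> h1 h2 h3 h4. nia. Qed.

Lemma comb_gen (gT : finGroupType) (f : gT -> gT) n : two_to_one f ->
  exists m', m' * (n + 3) < #|gT| /\ pres f <= n.+2 + m'.
Proof.
move=> tt.
have cY := cardY tt.
set Y := [set f x | x : gT] in cY *.
have cU : #|~: Y| = #|Y|.
  by apply/eqP; rewrite -(eqn_add2l #|Y|) cardsC addnn -muln2 cY.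
have dis : forall y, y \in Y -> y \notin ~: Y by move=> y; rewrite inE => ->.
have hq : #|Y| * 2 <= #|gT| by rewrite cY.
have [m' [h1 h2]] := core n dis (erefl _) cU hq.
exists m'; split; first by have -> : n + 3 = 2 + n + 1 by lia.
exact: reduce tt h2.
Qed.

Lemma comb4 (gT : finGroupType) (f : gT -> gT) : two_to_one f -> #|gT| = 4 -> pres f <= 2.
Proof.
move=> tt q4.
have cY := cardY tt.
set Y := [set f x | x : gT] in cY *.
have m2 : #|Y| = 2 by lia.
have cU : #|~: Y| = 2.
  by rewrite -m2; apply/eqP; rewrite -(eqn_add2l #|Y|) cardsC addnn -muln2 cY.
have dis : forall y, y \in Y -> y \notin ~: Y by move=> y; rewrite inE => ->.
have [c [Y' [U' [cm hc [cY' cU'] dis' comb]]]] := step dis m2 cU (ltn0Sn 1).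
rewrite q4 in hc.
have c2 : c = 2 by lia.
apply: reduce tt (comb 0 _).
by apply: Good0; rewrite cY' c2.
Qed.

Lemma nat_part1 (gT : finGroupType) (f : gT -> gT) : two_to_one f ->
  pres f * pres f < 4 * #|gT|.
Proof.
move=> tt.
have cY := cardY tt.
have Y0 : 0 < #|[set f x | x : gT]| by apply/card_gt0P; exists (f 1%g); apply: imset_f.
have q2 : 2 <= #|gT| by lia.
have [P [hP1 hP2]] : exists P, P * P < 4 * #|gT| /\ pres f <= P.
  case: (leqP #|gT| 4) => hq.
    have [m' [h1 h2]] := comb_gen 0 tt.
    exists (2 + m'); split => //; nia.
  have ex : exists k, #|gT| <= k * k by exists #|gT|; nia.
  case: (ex_minnP ex) => k hk kmin.
  have k3 : 3 <= k.
    rewrite leqNgt; apply/negP => h.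
    have : k * k <= 4 by nia.
    lia.
  have hk1 : (k - 1) * (k - 1) < #|gT|.
    rewrite ltnNge; apply/negP => h; have := kmin (k - 1) h; lia.
  have [m' [h1 h2]] := comb_gen (k - 3) tt.
  rewrite subnK // in h1.
  exists (k - 1 + m'); split; first exact: arith2.
  by apply: leq_trans h2 _; lia.
by apply: leq_ltn_trans hP1; apply: leq_mul.
Qed.

Lemma nat_part2 (gT : finGroupType) (f : gT -> gT) r : two_to_one f ->
  #|gT| = r * r -> pres f + 2 <= 2 * r.
Proof.
move=> tt hr.
have cY := cardY tt.
have Y0 : 0 < #|[set f x | x : gT]| by apply/card_gt0P; exists (f 1%g); apply: imset_f.
have r2 : 2 <= r by nia.
case: (ltnP r 3) => r3.
  have r2' : r = 2 by lia.
  have q4 : #|gT| = 4 by rewrite hr r2'.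
  have := comb4 tt q4.
  lia.
have [m' [h1 h2]] := comb_gen (r - 3) tt.
rewrite subnK // hr in h1.
have : m' < r by nia.
lia.
Qed.

End Aux.
Import Aux.
Local Open Scope ring_scope.

Lemma real1 (P q : nat) : (P * P < 4 * q)%N ->
  (P%:R : Rdefinitions.R) <= (Num.ceil (2 * Num.sqrt (q%:R : Rdefinitions.R)) - 1)%:~R.
Proof.
move=> hP.
have lt : (P%:R : Rdefinitions.R) < 2 * Num.sqrt (q%:R).
  rewrite ltNge; apply/negP => le.
  have h2 : (2 * Num.sqrt (q%:R : Rdefinitions.R)) * (2 * Num.sqrt q%:R) <= P%:R * P%:R.
    by apply: ler_pM => //; rewrite mulr_ge0 ?sqrtr_ge0.
  move: h2; rewrite mulrACA -(expr2 (Num.sqrt _)) sqr_sqrtr ?ler0n //.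
  rewrite -!natrM ler_nat; lia.
have : (P%:Z) < Num.ceil (2 * Num.sqrt (q%:R : Rdefinitions.R)).
  by rewrite ceil_gt_int.
move: (Num.ceil _) => c h.
have h' : (P%:Z) <= c - 1 by lia.
by rewrite -[P%:R]/((P%:Z)%:~R) ler_int.
Qed.

Lemma real2 (P r : nat) : (P + 2 <= 2 * r)%N ->
  (P%:R : Rdefinitions.R) <= 2 * Num.sqrt ((r ^ 2)%N%:R : Rdefinitions.R) - 2.
Proof.
move=> h.
rewrite natrX sqrtr_sqr ger0_norm ?ler0n //.
rewrite -(ler_nat Rdefinitions.R) natrD natrM in h.
move: h; move: (P%:R) (r%:R) => a b h; lra.
Qed.

Theorem theorem1p2 (gT : finGroupType) (f : gT -> gT) :
  ~~ odd #|gT| ->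
  two_to_one f ->
  ((pres f)%:R <= (Num.ceil (2 * Num.sqrt (#|gT|%:R : Rdefinitions.R)) - 1)%:~R :> Rdefinitions.R) /\
  ((exists m : nat, #|gT| = (m ^ 2)%N) ->
     (pres f)%:R <= 2 * Num.sqrt (#|gT|%:R : Rdefinitions.R) - 2 :> Rdefinitions.R).
Proof.
move=> _ tt; split.
  exact: real1 (nat_part1 tt).
move=> [r hr]; rewrite hr; apply: real2.
by apply: nat_part2 tt _; rewrite hr mulnn.
Qed.
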